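(* Let $\tilde u\in T^1\mathbb H$ be tangent to an oriented pair $(\tilde H,p)$. Then $|\tau_{\tilde H,p,\tilde u}|\le \ell(\tilde H,p)$.
   Context: $\mathbb H$ is the hyperbolic plane with distance $d$; for $v\in T^1\mathbb H$, $t\mapsto v(t)$ is the unit-speed geodesic with initial vector $v$ and $v(+\infty)$ its forward endpoint. Busemann function: $B_\xi(x,y)=\lim_{t\to\infty}(d(x,c(t))-d(y,c(t)))$ for any geodesic ray $c$ converging to $\xi\in\partial\mathbb H$. Let $\tilde H$ be a horocycle and $p$ a parabolic isometry preserving $\tilde H$. The translation length $\ell(\tilde H,p)$ is the length of the horocyclic arc between $x$ and $px$, for any $x\in\tilde H$. The positive orientation of $\tilde H$ relative to $p$ is that of an arc-length parametrization $s\mapsto\tilde H(s)$ with $p\tilde H(s)=\tilde H(s+\ell(\tilde H,p))$ for all $s$. A vector $\tilde u$ is tangent to the oriented pair $(\tilde H,p)$ if the geodesic ray $\tilde u(\mathbb R^+)$ is tangent to $\tilde H$ at a point $\tilde u(t_0)=\tilde H(s_0)$ (with $t_0\ge 0$) and $\frac{d\tilde u}{dt}(t_0)=\frac{d\tilde H}{ds}(s_0)$ for a positively oriented arc-length parametrization. The winding time is $\tau_{\tilde H,p,\tilde u}=B_{\tilde u(+\infty)}(p^{-1}\tilde u(0),\tilde u(0))$. *)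

(* Defs.v *)
From Stdlib Require Import Reals.
From Coquelicot Require Import Coquelicot.
Open Scope R_scope.

(* Upper half-plane model of the hyperbolic plane: points (x,y) with y > 0. *)
Definition pt : Type := (R * R)%type.
Definition inH (z : pt) : Prop := 0 < snd z.

(* acosh u = ln (u + sqrt (u^2 - 1)) *)
Definition hdist (z w : pt) : R :=
  let u := 1 + ((fst z - fst w) ^ 2 + (snd z - snd w) ^ 2)
               / (2 * snd z * snd w) in
  ln (u + sqrt (u * u - 1)).

(* A unit-speed geodesic line t |-> c t.  A unit tangent vector v is
   identified with its geodesic t |-> v(t), with base point v(0). *)
Definition geodesic (c : R -> pt) : Prop :=
  (forall t, inH (c t)) /\ (forall s t, hdist (c s) (c t) = Rabs (s - t)).

Definition busemann (c : R -> pt) (x y : pt) : R :=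
  real (Lim (fun t => hdist x (c t) - hdist y (c t)) p_infty).

(* Horocycles: the zero level set of a Busemann function, i.e. the
   horocycle centered at c(+oo) passing through c(0). *)
Definition horocycle (Hc : pt -> Prop) : Prop :=
  exists c, geodesic c /\
    forall z, Hc z <-> (inH z /\ busemann c z (c 0) = 0).

Definition isometry (f : pt -> pt) : Prop :=
  (forall z, inH z -> inH (f z)) /\
  (forall w, inH w -> exists z, inH z /\ f z = w) /\
  (forall z w, inH z -> inH w -> hdist (f z) (f w) = hdist z w).

Definition parabolic (f : pt -> pt) : Prop :=
  isometry f /\
  (forall z, inH z -> f z <> z) /\
  (forall eps, 0 < eps -> exists z, inH z /\ hdist z (f z) < eps).

Definition preserves (f : pt -> pt) (Hc : pt -> Prop) : Prop :=
  forall z, inH z -> (Hc (f z) <-> Hc z).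

Definition arclength_param (Hc : pt -> Prop) (h : R -> pt) : Prop :=
  (forall s, Hc (h s)) /\
  (forall z, Hc z -> exists s, h s = z) /\
  (forall s s', h s = h s' -> s = s') /\
  (forall s, ex_derive (fun t => fst (h t)) s /\
             ex_derive (fun t => snd (h t)) s /\
             sqrt ((Derive (fun t => fst (h t)) s) ^ 2 +
                   (Derive (fun t => snd (h t)) s) ^ 2) = snd (h s)).

(* h is a positively oriented arc-length parametrization of Hc relative
   to p, and l = ell(Hc,p) is the translation length (the hyperbolic arc
   length between h s and p (h s) = h (s + l), which equals l >= 0). *)
Definition pos_oriented_param (Hc : pt -> Prop) (p : pt -> pt)
    (h : R -> pt) (l : R) : Prop :=
  arclength_param Hc h /\ 0 <= l /\ (forall s, p (h s) = h (s + l)).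

(* u is tangent to the oriented pair (Hc,p) (with orientation given by h). *)
Definition tangent_to (u : R -> pt) (h : R -> pt) : Prop :=
  exists t0 s0, 0 <= t0 /\ u t0 = h s0 /\
    ex_derive (fun t => fst (u t)) t0 /\ ex_derive (fun t => snd (u t)) t0 /\
    Derive (fun t => fst (u t)) t0 = Derive (fun t => fst (h t)) s0 /\
    Derive (fun t => snd (u t)) t0 = Derive (fun t => snd (h t)) s0.

(* winding time tau = B_{u(+oo)}(p^{-1} u(0), u(0)); pinv_u0 = p^{-1}(u 0). *)
Definition winding_time (u : R -> pt) (pinv_u0 : pt) : R :=
  busemann u pinv_u0 (u 0).

(* Main.v *)
Require Import Defs.
From Stdlib Require Import Reals Lra Psatz.
From Coquelicot Require Import Coquelicot.
Open Scope R_scope.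

Record V3 := mkV { c0 : R; c1 : R; c2 : R }.
Definition L (a b : V3) : R := c0 a * c0 b - c1 a * c1 b - c2 a * c2 b.
Definition vadd (a b : V3) := mkV (c0 a + c0 b) (c1 a + c1 b) (c2 a + c2 b).
Definition vsc (k : R) (a : V3) := mkV (k * c0 a) (k * c1 a) (k * c2 a).

Definition Phi (z : pt) : V3 :=
  mkV ((fst z ^ 2 + snd z ^ 2 + 1) / (2 * snd z)) (fst z / snd z)
      ((fst z ^ 2 + snd z ^ 2 - 1) / (2 * snd z)).

Definition ch (x : R) := (exp x + exp (- x)) / 2.
Definition sh (x : R) := (exp x - exp (- x)) / 2.

Lemma exp_neg x : exp (- x) = / exp x.
Proof. apply exp_Ropp. Qed.

Lemma ch_sh x : ch x ^ 2 - sh x ^ 2 = 1.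
Proof. unfold ch, sh. rewrite exp_neg. assert (exp x <> 0) by (apply Rgt_not_eq, exp_pos). field; auto. Qed.

Lemma ch_minus a b : ch (a - b) = ch a * ch b - sh a * sh b.
Proof. unfold ch, sh. unfold Rminus. rewrite Ropp_plus_distr, Ropp_involutive, !exp_plus, !exp_neg.
assert (exp a <> 0) by (apply Rgt_not_eq, exp_pos). assert (exp b <> 0) by (apply Rgt_not_eq, exp_pos).
field; auto. Qed.

Lemma ch_even x : ch (- x) = ch x.
Proof. unfold ch. rewrite Ropp_involutive. lra. Qed.

Lemma ch_abs x : ch (Rabs x) = ch x.
Proof. destruct (Rle_dec 0 x). rewrite Rabs_right; lra. rewrite Rabs_left by lra. apply ch_even. Qed.

Lemma L_Phi z w : 0 < snd z -> 0 < snd w ->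
  L (Phi z) (Phi w) = 1 + ((fst z - fst w) ^ 2 + (snd z - snd w) ^ 2) / (2 * snd z * snd w).
Proof. intros. unfold L, Phi; simpl. field. lra. Qed.

Lemma L_Phi_self z : 0 < snd z -> L (Phi z) (Phi z) = 1.
Proof. intros. rewrite L_Phi by auto. replace (fst z - fst z) with 0 by ring.
replace (snd z - snd z) with 0 by ring. unfold Rdiv. ring. Qed.

Lemma ch_hdist z w : 0 < snd z -> 0 < snd w -> ch (hdist z w) = L (Phi z) (Phi w).
Proof. intros Hz Hw. rewrite L_Phi by auto. unfold hdist.
assert (H0 : 0 <= ((fst z - fst w) ^ 2 + (snd z - snd w) ^ 2) / (2 * snd z * snd w)).
{ apply Rdiv_le_0_compat. apply Rplus_le_le_0_compat; apply pow2_ge_0.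
  apply Rmult_lt_0_compat; lra. }
generalize dependent (((fst z - fst w) ^ 2 + (snd z - snd w) ^ 2) / (2 * snd z * snd w)).
intros q Hq. set (v := 1 + q).
assert (Hv : 1 <= v) by (unfold v; lra). clearbody v.
assert (Hs : 0 <= v * v - 1) by nra.
pose proof (sqrt_sqrt _ Hs). pose proof (sqrt_pos (v*v-1)).
set (s := sqrt (v*v-1)) in *. clearbody s.
assert (Ha : 0 < v + s) by lra.
unfold ch. rewrite exp_neg, exp_ln by auto.
assert (Hp : (v+s)*(v-s) = 1) by nra.
assert (Hi : / (v+s) = v - s).
{ apply Rmult_eq_reg_l with (v+s); [|lra]. rewrite Rinv_r by lra. lra. }
rewrite Hi. lra. Qed.

Lemma Phi0_pos z : 0 < snd z -> 0 < c0 (Phi z).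
Proof. intros. unfold Phi; simpl. apply Rdiv_lt_0_compat; nra. Qed.

Lemma Phi_inj z w : 0 < snd z -> 0 < snd w -> Phi z = Phi w -> z = w.
Proof. intros Hz Hw E.
assert (E0 : c0 (Phi z) - c2 (Phi z) = c0 (Phi w) - c2 (Phi w)) by (rewrite E; auto).
assert (E1 : c1 (Phi z) = c1 (Phi w)) by (rewrite E; auto).
assert (K : forall q, 0 < snd q -> c0 (Phi q) - c2 (Phi q) = / snd q).
{ intros q Hq. unfold Phi; cbn [c0 c2]. field. lra. }
rewrite !K in E0 by auto.
assert (Hy : snd z = snd w).
{ rewrite <- (Rinv_inv (snd z)), <- (Rinv_inv (snd w)), E0; auto. }
unfold Phi in E1; cbn [c1] in E1.
rewrite Hy in E1. assert (fst z = fst w).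
{ apply Rmult_eq_reg_r with (/ snd w). exact E1. apply Rinv_neq_0_compat; lra. }
destruct z, w; simpl in *; subst; auto. Qed.
Lemma V3_eq a b : c0 a = c0 b -> c1 a = c1 b -> c2 a = c2 b -> a = b.
Proof. destruct a, b; simpl; intros; subst; auto. Qed.

Lemma timelike_zero T Q : 0 < L T T -> L Q T = 0 -> L Q Q = 0 ->
  c0 Q = 0 /\ c1 Q = 0 /\ c2 Q = 0.
Proof. destruct T as [a b c], Q as [q0 q1 q2]; unfold L; simpl. intros HT H1 H2.
assert (Hcs : (b*q1 + c*q2)^2 <= (b*b + c*c) * (q1*q1+q2*q2)).
{ assert (0 <= (b*q2 - c*q1)^2) by apply pow2_ge_0. nra. }
assert (q0 * q0 * (a*a - b*b - c*c) <= 0).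
{ assert (a*q0 = b*q1+c*q2) by lra. assert (q0*q0 = q1*q1+q2*q2) by lra.
  assert ((a*q0)^2 <= (b*b+c*c)*(q0*q0)) by (rewrite H, H0; exact Hcs). nra. }
assert (q0 * q0 <= 0).
{ destruct (Rle_dec (q0*q0) 0); auto. exfalso. assert (0 < q0*q0) by lra. nra. }
assert (q0 = 0) by nra. subst. assert (q1 * q1 + q2*q2 = 0) by lra.
split; auto. split; nra. Qed.

Lemma sh1_pos : 0 < sh 1.
Proof. unfold sh. assert (exp (- (1)) < exp 1) by (apply exp_increasing; lra). lra. Qed.

Definition vsub a b := mkV (c0 a - c0 b) (c1 a - c1 b) (c2 a - c2 b).

Lemma geo_class c : geodesic c -> exists E, L E E = -1 /\ L (Phi (c 0)) E = 0 /\
  forall t, Phi (c t) = vadd (vsc (ch t) (Phi (c 0))) (vsc (sh t) E).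
Proof. intros [Hin Hd].
assert (HL : forall s t, L (Phi (c s)) (Phi (c t)) = ch (s - t)).
{ intros s t. rewrite <- ch_hdist by apply Hin. rewrite Hd. apply ch_abs. }
set (P0 := Phi (c 0)). set (P1 := Phi (c 1)).
pose proof sh1_pos as HS.
set (E := vsc (/ sh 1) (vsub P1 (vsc (ch 1) P0))).
assert (H00 : L P0 P0 = 1) by (unfold P0; rewrite HL; unfold ch; replace (0-0) with 0 by ring; rewrite Ropp_0, exp_0; lra).
assert (H11 : L P1 P1 = 1) by (unfold P1; rewrite HL; unfold ch; replace (1-1) with 0 by ring; rewrite Ropp_0, exp_0; lra).
assert (H01 : L P0 P1 = ch 1) by (unfold P0, P1; rewrite HL; replace (0-1) with (- (1)) by ring; apply ch_even).
pose proof (ch_sh 1) as CS1.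
assert (HEE : L E E = -1).
{ unfold E. replace (L (vsc (/ sh 1) (vsub P1 (vsc (ch 1) P0))) (vsc (/ sh 1) (vsub P1 (vsc (ch 1) P0))))
   with (/ sh 1 * / sh 1 * (L P1 P1 - 2 * ch 1 * L P0 P1 + ch 1 * ch 1 * L P0 P0))
   by (unfold L; destruct P0, P1; simpl; ring).
  rewrite H00, H11, H01. field_simplify; [|lra]. replace (- ch 1 ^ 2 + 1) with (- sh 1 ^ 2) by lra. field. lra. }
assert (HPE : L P0 E = 0).
{ unfold E. replace (L P0 (vsc (/ sh 1) (vsub P1 (vsc (ch 1) P0)))) with (/ sh 1 * (L P0 P1 - ch 1 * L P0 P0))
   by (unfold L; destruct P0, P1; simpl; ring).
  rewrite H00, H01. ring. }
exists E. split; [|split]; auto. intro t.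
set (Pt := Phi (c t)).
set (Q := vsub Pt (vadd (vsc (ch t) P0) (vsc (sh t) E))).
assert (Ht0 : L Pt P0 = ch t) by (unfold Pt, P0; rewrite HL; f_equal; ring).
assert (Ht1 : L Pt P1 = ch t * ch 1 - sh t * sh 1) by (unfold Pt, P1; rewrite HL; apply ch_minus).
assert (Htt : L Pt Pt = 1) by (unfold Pt; apply L_Phi_self, Hin).
pose proof (ch_sh t) as CSt.
assert (HQ0 : L Q P0 = 0).
{ unfold Q, E. replace (L (vsub Pt (vadd (vsc (ch t) P0) (vsc (sh t) (vsc (/ sh 1) (vsub P1 (vsc (ch 1) P0)))))) P0)
   with (L Pt P0 - ch t * L P0 P0 - sh t / sh 1 * (L P0 P1 - ch 1 * L P0 P0))
   by (unfold L; destruct P0, P1, Pt; simpl; field; lra).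
  rewrite Ht0, H00, H01. ring. }
assert (HQQ : L Q Q = 0).
{ unfold Q, E. set (a := ch t - sh t * ch 1 / sh 1). set (b := sh t / sh 1).
  replace (L (vsub Pt (vadd (vsc (ch t) P0) (vsc (sh t) (vsc (/ sh 1) (vsub P1 (vsc (ch 1) P0))))))
             (vsub Pt (vadd (vsc (ch t) P0) (vsc (sh t) (vsc (/ sh 1) (vsub P1 (vsc (ch 1) P0)))))))
   with (L Pt Pt + a*a * L P0 P0 + b*b*L P1 P1 - 2*a*L Pt P0 - 2*b*L Pt P1 + 2*a*b*L P0 P1)
   by (unfold a, b, L; destruct P0, P1, Pt; simpl; field; lra).
  rewrite Ht0, H00, H01, H11, Ht1, Htt. unfold a, b.
  field_simplify; [|lra].
  replace (ch t ^ 2) with (1 + sh t ^ 2) by lra.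
  replace (ch 1 ^ 2) with (1 + sh 1 ^ 2) by lra. unfold Rdiv. ring_simplify. auto. }
assert (HT : 0 < L P0 P0) by lra.
destruct (timelike_zero P0 Q HT HQ0 HQQ) as [Z0 [Z1 Z2]].
unfold Q, vsub in Z0, Z1, Z2; simpl in Z0, Z1, Z2.
apply V3_eq; simpl; lra. Qed.
Lemma lim_exp_m2 : is_lim (fun t => exp (-2 * t)) p_infty 0.
Proof.
  apply (is_lim_comp (fun y => exp y) (fun t => -2 * t) p_infty 0 m_infty).
  - apply is_lim_exp_m.
  - replace m_infty with (Rbar_mult (-2) p_infty).
    apply (is_lim_scal_l (fun t => t) (-2) p_infty p_infty). apply is_lim_id.
    simpl. destruct (Rle_dec 0 (-2)) as [Hc|Hc]; [exfalso; lra|]. reflexivity.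
  - exists 0. intros. discriminate.
Qed.
Definition Gf (A Kc e : R) := ln ((A + e * Kc) / 2 + sqrt (((A + e * Kc) / 2) ^ 2 - e)).

Lemma Gf_cont A Kc : 0 < A -> continuous (Gf A Kc) 0.
Proof. intros HA. apply (ex_derive_continuous (Gf A Kc) 0). unfold Gf. auto_derive.
  pose proof (sqrt_pos ((A + 0 * Kc) * / 2 * ((A + 0 * Kc) * / 2 * 1) + - 0)).
  split; [nra|]. split; [lra|]. exact I.
Qed.

Lemma Gf0 A Kc : 0 < A -> Gf A Kc 0 = ln A.
Proof. intros. unfold Gf. replace ((A + 0 * Kc) / 2) with (A/2) by field.
  replace ((A/2)^2 - 0) with ((A/2)^2) by ring. rewrite sqrt_pow2 by lra. f_equal. field. Qed.

Lemma buse_lim A Kc (v : R -> R) : 0 < A ->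
  (forall t, v t = (exp t * A + exp (- t) * Kc) / 2) -> (forall t, 1 <= v t) ->
  is_lim (fun t => ln (v t + sqrt (v t * v t - 1)) - t) p_infty (ln A).
Proof. intros HA Hv H1.
  rewrite <- (Gf0 A Kc HA).
  apply is_lim_ext with (fun t => Gf A Kc (exp (-2 * t))).
  2: { apply is_lim_comp_continuous. apply lim_exp_m2. apply Gf_cont; auto. }
  intro t. unfold Gf. specialize (H1 t). specialize (Hv t). set (V := v t) in *. clearbody V.
  assert (Hs : 0 <= V * V - 1) by nra.
  pose proof (sqrt_pos (V * V - 1)).
  assert (He : 0 < exp (- t)) by apply exp_pos.
  assert (E1 : exp (-2 * t) = exp (- t) * exp (- t)).
  { rewrite <- exp_plus. f_equal. ring. }
  assert (E2 : exp (- t) * exp t = 1). { rewrite <- exp_plus. replace (- t + t) with 0 by ring. apply exp_0. }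
  assert (E3 : (A + exp (-2 * t) * Kc) / 2 = exp (- t) * V).
  { rewrite Hv, E1. transitivity ((exp (-t) * exp t * A + exp (-t) * exp (-t) * Kc) / 2).
    rewrite E2. field. field. }
  rewrite E3, E1.
  replace ((exp (- t) * V) ^ 2 - exp (- t) * exp (- t)) with ((exp (-t) * exp (-t)) * (V * V - 1)) by ring.
  rewrite sqrt_mult_alt by nra. rewrite sqrt_square by lra.
  replace (exp (- t) * V + exp (- t) * sqrt (V * V - 1)) with (exp (-t) * (V + sqrt (V*V-1))) by ring.
  rewrite ln_mult by lra. rewrite ln_exp. match goal with |- ?a = ?b => change (@eq R a b) end. ring.
Qed.
Lemma null_pos P N Y : 0 < c0 P -> L P P = 1 -> L N N = 0 -> L N P = 1 ->
  0 < c0 Y -> L Y Y = 1 -> 0 < L Y N.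
Proof. destruct P as [p0 p1 p2], N as [n0 n1 n2], Y as [y0 y1 y2]; unfold L; simpl.
intros Hp0 HP HN HNP Hy0 HY.
assert (Hcs : forall a b c d, (a*c+b*d)^2 <= (a*a+b*b)*(c*c+d*d)).
{ intros. assert (0 <= (a*d-b*c)^2) by apply pow2_ge_0. nra. }
assert (Hn0 : 0 < n0).
{ destruct (Rle_dec n0 0) as [Hle|Hgt]; [|lra]. exfalso.
  pose proof (Hcs n1 n2 p1 p2).
  assert (n1*p1+n2*p2 = n0*p0 - 1) by lra.
  rewrite H0 in H. assert (n1*n1+n2*n2 = n0*n0) by lra. assert (p1*p1+p2*p2 = p0*p0-1) by lra.
  rewrite H1, H2 in H. nra. }
pose proof (Hcs n1 n2 y1 y2).
assert (n1*n1+n2*n2 = n0*n0) by lra. assert (y1*y1+y2*y2 = y0*y0-1) by lra.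
rewrite H0, H1 in H.
assert (Hlt : (n1*y1+n2*y2)^2 < (n0*y0)^2) by nra.
assert (n1*y1+n2*y2 < n0*y0).
{ assert (0 < n0*y0) by (apply Rmult_lt_0_compat; lra).
  destruct (Rle_dec (n1*y1+n2*y2) 0). lra.
  destruct (Rlt_dec (n1*y1+n2*y2) (n0*y0)); auto. exfalso.
  assert (n0*y0 <= n1*y1+n2*y2) by lra.
  assert ((n0*y0)*(n0*y0) <= (n1*y1+n2*y2)*(n1*y1+n2*y2)) by (apply Rmult_le_compat; lra).
  nra. }
lra. Qed.

Lemma hdist_L z w : 0 < snd z -> 0 < snd w ->
  hdist z w = ln (L (Phi z) (Phi w) + sqrt (L (Phi z) (Phi w) * L (Phi z) (Phi w) - 1)).
Proof. intros. rewrite L_Phi by auto. reflexivity. Qed.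

Lemma L_ge1 z w : 0 < snd z -> 0 < snd w -> 1 <= L (Phi z) (Phi w).
Proof. intros. rewrite L_Phi by auto.
assert (0 <= ((fst z - fst w) ^ 2 + (snd z - snd w) ^ 2) / (2 * snd z * snd w)).
{ apply Rdiv_le_0_compat. apply Rplus_le_le_0_compat; apply pow2_ge_0.
  apply Rmult_lt_0_compat; lra. } lra. Qed.

Lemma L_lin a b P E : L a (vadd (vsc (ch b) P) (vsc (sh b) E)) = ch b * L a P + sh b * L a E.
Proof. destruct a, P, E; unfold L; simpl. ring. Qed.

Lemma geo_lim c E z : geodesic c -> L E E = -1 -> L (Phi (c 0)) E = 0 ->
  (forall t, Phi (c t) = vadd (vsc (ch t) (Phi (c 0))) (vsc (sh t) E)) ->
  inH z -> 0 < L (Phi z) (vadd (Phi (c 0)) E) ->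
  is_lim (fun t => hdist z (c t) - t) p_infty (ln (L (Phi z) (vadd (Phi (c 0)) E))).
Proof. intros [Hin Hd] HEE HPE Hc Hz Hpos.
apply (buse_lim _ (L (Phi z) (Phi (c 0)) - L (Phi z) E) (fun t => L (Phi z) (Phi (c t)))) in Hpos.
- eapply is_lim_ext; [|exact Hpos]. intro t. simpl. rewrite hdist_L; [reflexivity | exact Hz | apply Hin].
- intro t. rewrite Hc, L_lin. unfold ch, sh. destruct (Phi z), (Phi (c 0)), E; unfold L, vadd; simpl. field.
- intro t. apply L_ge1; [exact Hz | apply Hin].
Qed.
Lemma N_props P E : L P P = 1 -> L E E = -1 -> L P E = 0 ->
  L (vadd P E) (vadd P E) = 0 /\ L (vadd P E) P = 1.
Proof. intros. destruct P, E; unfold L, vadd in *; simpl in *. split; nra. Qed.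

Lemma buse_val c E x y : geodesic c -> L E E = -1 -> L (Phi (c 0)) E = 0 ->
  (forall t, Phi (c t) = vadd (vsc (ch t) (Phi (c 0))) (vsc (sh t) E)) ->
  inH x -> inH y ->
  busemann c x y = ln (L (Phi x) (vadd (Phi (c 0)) E)) - ln (L (Phi y) (vadd (Phi (c 0)) E)).
Proof. intros Hg HEE HPE Hc Hx Hy.
pose proof Hg as [Hin _].
assert (HP1 : L (Phi (c 0)) (Phi (c 0)) = 1) by (apply L_Phi_self, Hin).
destruct (N_props _ _ HP1 HEE HPE) as [HNN HNP].
assert (pos : forall z, inH z -> 0 < L (Phi z) (vadd (Phi (c 0)) E)).
{ intros z Hz. apply (null_pos (Phi (c 0))); auto. apply Phi0_pos, Hin. apply Phi0_pos, Hz. apply L_Phi_self, Hz. }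
unfold busemann.
assert (H := is_lim_minus' _ _ _ _ _ (geo_lim c E x Hg HEE HPE Hc Hx (pos x Hx)) (geo_lim c E y Hg HEE HPE Hc Hy (pos y Hy))).
rewrite (is_lim_unique (fun t => hdist x (c t) - hdist y (c t)) p_infty
   (ln (L (Phi x) (vadd (Phi (c 0)) E)) - ln (L (Phi y) (vadd (Phi (c 0)) E)))).
reflexivity.
eapply is_lim_ext; [|exact H]. intro t. simpl. ring.
Qed.
Definition dPhi (z : pt) (a b : R) : V3 :=
  mkV (a * fst z / snd z + b * (snd z ^ 2 - fst z ^ 2 - 1) / (2 * snd z ^ 2))
      (a / snd z - b * fst z / snd z ^ 2)
      (a * fst z / snd z + b * (snd z ^ 2 - fst z ^ 2 + 1) / (2 * snd z ^ 2)).

Lemma dPhi_speed z a b : 0 < snd z -> L (dPhi z a b) (dPhi z a b) = - ((a^2 + b^2) / snd z ^ 2).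
Proof. intros. unfold L, dPhi; simpl. field. lra. Qed.

Lemma dPhi_orth z a b : 0 < snd z -> L (Phi z) (dPhi z a b) = 0.
Proof. intros. unfold L, dPhi, Phi; simpl. field. lra. Qed.

Definition Xc (g : R -> pt) := fun s => fst (g s).
Definition Yc (g : R -> pt) := fun s => snd (g s).

Lemma dPhi_deriv (g : R -> pt) t : ex_derive (fun s => fst (g s)) t -> ex_derive (fun s => snd (g s)) t ->
  0 < snd (g t) ->
  let D := dPhi (g t) (Derive (fun s => fst (g s)) t) (Derive (fun s => snd (g s)) t) in
  is_derive (fun s => c0 (Phi (g s))) t (c0 D) /\
  is_derive (fun s => c1 (Phi (g s))) t (c1 D) /\
  is_derive (fun s => c2 (Phi (g s))) t (c2 D).
Proof. intros HX HY Hy D.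
change (fun s => fst (g s)) with (Xc g) in *. change (fun s => snd (g s)) with (Yc g) in *.
change (snd (g t)) with (Yc g t) in Hy.
unfold D, dPhi, Phi; cbn [c0 c1 c2].
change (fst (g t)) with (Xc g t). change (snd (g t)) with (Yc g t).
split; [|split].
- apply is_derive_ext with (f := fun s => (Xc g s ^ 2 + Yc g s ^ 2 + 1) / (2 * Yc g s)); [reflexivity|].
  auto_derive. repeat split; auto; lra. change (fun x => Xc g x) with (Xc g); change (fun x => Yc g x) with (Yc g); match goal with |- ?a = ?b => change (@eq R a b) end; field; lra.
- apply is_derive_ext with (f := fun s => Xc g s / Yc g s); [reflexivity|].
  auto_derive. repeat split; auto; lra. change (fun x => Xc g x) with (Xc g); change (fun x => Yc g x) with (Yc g); match goal with |- ?a = ?b => change (@eq R a b) end; field; lra.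
- apply is_derive_ext with (f := fun s => (Xc g s ^ 2 + Yc g s ^ 2 - 1) / (2 * Yc g s)); [reflexivity|].
  auto_derive. repeat split; auto; lra. change (fun x => Xc g x) with (Xc g); change (fun x => Yc g x) with (Yc g); match goal with |- ?a = ?b => change (@eq R a b) end; field; lra.
Qed.
Lemma sign_lemma (r : R -> R) m d : is_derive r m d -> d <> 0 ->
  exists del, 0 < del /\ forall h, h <> 0 -> Rabs h < del -> 0 < (r (m + h) - r m) / h * d.
Proof. intros Hd Hn. apply is_derive_Reals in Hd.
assert (He : 0 < Rabs d / 2) by (apply Rabs_pos_lt in Hn; lra).
destruct (Hd _ He) as [del Hdel]. exists del. split; [apply cond_pos|].
intros h Hh Hh'. specialize (Hdel h Hh Hh').
set (q := (r (m + h) - r m) / h) in *.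
destruct (Rle_dec 0 d).
- rewrite (Rabs_right d) in Hdel by lra. apply Rabs_def2 in Hdel. destruct Hdel. nra.
- rewrite (Rabs_left d) in Hdel by lra. apply Rabs_def2 in Hdel. destruct Hdel. nra.
Qed.

Lemma cont_of_deriv (r dr : R -> R) : (forall s, is_derive r s (dr s)) -> forall s, continuity_pt r s.
Proof. intros H s. apply derivable_continuous_pt. exists (dr s). apply is_derive_Reals, H. Qed.

Lemma no_switch (r dr : R -> R) a b : a < b -> (forall s, is_derive r s (dr s)) ->
  (forall s, dr s = 1 \/ dr s = -1) -> dr a = 1 -> dr b = -1 -> False.
Proof. intros Hab Hd H1 Ha Hb.
destruct (continuity_ab_maj r a b) as [m [Hm Hmab]]; [lra| intros; eapply cont_of_deriv; eauto |].
destruct (H1 m) as [Hm1|Hm1].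
- assert (m <> b) by (intro; subst; lra).
  destruct (sign_lemma r m (dr m) (Hd m)) as [del [Hdel Hs]]; [lra|].
  set (h := Rmin (del/2) ((b - m)/2)).
  assert (0 < h) by (unfold h; apply Rmin_pos; lra).
  assert (h <= del/2) by apply Rmin_l. assert (h <= (b-m)/2) by apply Rmin_r.
  specialize (Hs h ltac:(lra) ltac:(rewrite Rabs_right; lra)).
  rewrite Hm1 in Hs. specialize (Hm (m+h) ltac:(lra)).
  assert (0 < r (m + h) - r m).
  { assert (Hq : (r (m + h) - r m) / h * 1 * h = r (m + h) - r m) by (field; lra).
    rewrite <- Hq. apply Rmult_lt_0_compat; lra. }
  lra.
- assert (m <> a) by (intro; subst; lra).
  destruct (sign_lemma r m (dr m) (Hd m)) as [del [Hdel Hs]]; [lra|].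
  set (h := Rmin (del/2) ((m - a)/2)).
  assert (0 < h) by (unfold h; apply Rmin_pos; lra).
  assert (h <= del/2) by apply Rmin_l. assert (h <= (m-a)/2) by apply Rmin_r.
  specialize (Hs (-h) ltac:(lra) ltac:(rewrite Rabs_left; lra)).
  rewrite Hm1 in Hs. specialize (Hm (m+ -h) ltac:(lra)).
  assert (0 < r (m + - h) - r m).
  { assert (Hq : (r (m + - h) - r m) / - h * -1 * h = r (m + - h) - r m) by (field; lra).
    rewrite <- Hq. apply Rmult_lt_0_compat; lra. }
  lra.
Qed.

Lemma darboux_one (r dr : R -> R) s0 : (forall s, is_derive r s (dr s)) ->
  (forall s, dr s = 1 \/ dr s = -1) -> dr s0 = 1 -> forall s, dr s = 1.
Proof. intros Hd H1 H0 s. destruct (H1 s) as [|Hs]; auto. exfalso.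
destruct (Rtotal_order s0 s) as [Hlt|[Heq|Hgt]].
- exact (no_switch r dr s0 s Hlt Hd H1 H0 Hs).
- subst. lra.
- apply (no_switch (fun x => - r x) (fun x => - dr x) s s0 Hgt).
  + intro x. apply (is_derive_opp r x (dr x)), Hd.
  + intro x. destruct (H1 x); [right|left]; lra.
  + lra.
  + lra.
Qed.

Lemma affine_of_deriv (r : R -> R) s0 : (forall s, is_derive r s 1) -> forall s, r s = r s0 + (s - s0).
Proof. intros Hd s.
assert (Hc : forall x, continuity_pt r x) by (apply (cont_of_deriv r (fun _ => 1)); auto).
assert (Hci : forall x, continuity_pt (fun y => y) x) by (intro; apply continuity_pt_id).
assert (key : forall a b, a <= b -> exists C, forall x, a <= x <= b -> r x = x + C).
{ intros a b Hab. apply fn_eq_Derive_eq; auto.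
  - intros. eexists. apply Hd.
  - intros. auto_derive. auto.
  - intros. rewrite (is_derive_unique _ _ _ (Hd x)). rewrite Derive_id. auto. }
destruct (Rle_dec s0 s).
- destruct (key s0 s r0) as [C HC]. rewrite (HC s), (HC s0); lra.
- destruct (key s s0 ltac:(lra)) as [C HC]. rewrite (HC s), (HC s0); lra.
Qed.
Definition mN (N X : V3) := c1 X * c2 N - c2 X * c1 N.

Lemma perp_polar N D W : L N N = 0 -> L D N = 0 -> L W N = 0 ->
  c0 N ^ 2 * L D W = - (mN N D * mN N W).
Proof. destruct N as [n0 n1 n2], D as [d0 d1 d2], W as [w0 w1 w2]; unfold L, mN; cbn [c0 c1 c2].
intros HN HD HW.
assert (E : n0 ^ 2 * (d0 * w0 - d1 * w1 - d2 * w2) = (d0 * n0) * (w0 * n0) - (n0*n0) * (d1*w1 + d2*w2)) by ring.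
rewrite E. replace (d0 * n0) with (d1*n1 + d2*n2) by lra. replace (w0 * n0) with (w1*n1 + w2*n2) by lra.
replace (n0 * n0) with (n1*n1 + n2*n2) by lra. ring. Qed.

Lemma dr_sq N V D : c0 N <> 0 -> L N N = 0 -> L V V = -1 -> L V N = 0 -> L D D = -1 -> L D N = 0 ->
  (L D V) ^ 2 = 1.
Proof. intros Hn HN HVV HVN HDD HDN.
pose proof (perp_polar N V V HN HVN HVN) as A1.
pose proof (perp_polar N D D HN HDN HDN) as A2.
pose proof (perp_polar N D V HN HDN HVN) as A3.
rewrite HVV in A1. rewrite HDD in A2.
set (n := c0 N) in *. set (a := mN N V) in *. set (b := mN N D) in *. set (x := L D V) in *.
assert (Hn2 : 0 < n ^ 2) by (apply pow2_gt_0; auto).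
assert (n^2 * n^2 * x^2 = (a*a) * (b*b)) by (replace (n^2*n^2*x^2) with ((n^2*x)^2) by ring; rewrite A3; ring).
replace (a*a) with (n^2) in H by lra. replace (b*b) with (n^2) in H by lra.
apply Rmult_eq_reg_l with (n^2 * n^2). lra. nra. Qed.

Definition phiv (X0 V N : V3) (r : R) : V3 :=
  mkV (c0 X0 + r * c0 V + r^2/2 * c0 N) (c1 X0 + r * c1 V + r^2/2 * c1 N) (c2 X0 + r * c2 V + r^2/2 * c2 N).

Lemma L_sym a b : L a b = L b a.
Proof. unfold L; ring. Qed.

Lemma L_phiv Y X0 V N r : L Y (phiv X0 V N r) = L Y X0 + r * L Y V + r^2/2 * L Y N.
Proof. destruct Y, X0, V, N; unfold L, phiv; simpl. field. Qed.

Lemma horo_point N X0 V Y : c0 N <> 0 -> L N N = 0 -> L X0 X0 = 1 -> L X0 N = 1 -> L V V = -1 ->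
  L V N = 0 -> L X0 V = 0 -> L Y Y = 1 -> L Y N = 1 -> Y = phiv X0 V N (- L Y V).
Proof. intros Hn HN HXX HXN HVV HVN HXV HYY HYN.
set (r := - L Y V).
set (P := phiv X0 V N r).
set (Z := vsub Y P).
assert (HPN : L P N = 1).
{ unfold P. rewrite L_sym, L_phiv, (L_sym N X0), (L_sym N V), HXN, HVN, HN. field. }
assert (HPV : L P V = - r).
{ unfold P. rewrite L_sym, L_phiv, (L_sym V X0), HXV, HVV, HVN. field. }
assert (HPP : L P P = 1).
{ unfold P. rewrite L_phiv. rewrite !(L_sym (phiv X0 V N r)), !L_phiv.
  rewrite (L_sym V X0), (L_sym N X0), (L_sym N V), HXX, HXV, HXN, HVV, HVN, HN. field. }
assert (Lsub : forall a b c, L (vsub a b) c = L a c - L b c) by (intros; unfold L, vsub; simpl; ring).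
assert (HZN : L Z N = 0) by (unfold Z; rewrite Lsub; lra).
assert (HZV : L Z V = 0) by (unfold Z; rewrite Lsub, HPV; unfold r; lra).
assert (HZT : L Z (vadd Y P) = 0).
{ unfold Z. rewrite Lsub. replace (L Y (vadd Y P)) with (L Y Y + L Y P) by (unfold L, vadd; simpl; ring).
  replace (L P (vadd Y P)) with (L P Y + L P P) by (unfold L, vadd; simpl; ring).
  rewrite (L_sym P Y). lra. }
assert (HNT : L N (vadd Y P) = 2).
{ replace (L N (vadd Y P)) with (L Y N + L P N) by (unfold L, vadd; simpl; ring). lra. }
pose proof (perp_polar N Z V HN HZN HVN) as A1.
pose proof (perp_polar N V V HN HVN HVN) as A2.
rewrite HZV in A1. rewrite HVV in A2.
assert (HmZ : mN N Z = 0).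
{ assert (mN N V * mN N V <> 0) by (assert (0 < c0 N ^ 2) by (apply pow2_gt_0; auto); nra).
  assert (mN N Z * mN N V = 0) by lra.
  apply Rmult_integral in H0. destruct H0; auto. exfalso. apply H. rewrite H0. ring. }
assert (HZ0 : c0 Z = 0 /\ c1 Z = 0 /\ c2 Z = 0).
{ clear -Hn HN HmZ HZN HZT HNT.
destruct N as [n0 n1 n2], Z as [z0 z1 z2], (vadd Y P) as [t0 t1 t2]; unfold L, mN in *; cbn [c0 c1 c2] in *.
assert (E1 : z1 * n0 = z0 * n1).
{ apply Rmult_eq_reg_l with n0; auto. replace (n0 * (z1 * n0)) with (z1 * (n0*n0)) by ring.
  replace (n0*n0) with (n1*n1+n2*n2) by lra.
  replace (n0 * (z0 * n1)) with (n1 * (z0*n0)) by ring.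
  replace (z0 * n0) with (z1*n1+z2*n2) by lra.
  replace (z1*(n1*n1+n2*n2)) with (n1*(z1*n1) + n2*(z1*n2)) by ring. replace (z1*n2) with (z2*n1) by lra. ring. }
assert (E2 : z2 * n0 = z0 * n2).
{ apply Rmult_eq_reg_l with n0; auto. replace (n0 * (z2 * n0)) with (z2 * (n0*n0)) by ring.
  replace (n0*n0) with (n1*n1+n2*n2) by lra.
  replace (n0 * (z0 * n2)) with (n2 * (z0*n0)) by ring.
  replace (z0 * n0) with (z1*n1+z2*n2) by lra.
  replace (z2*(n1*n1+n2*n2)) with (n1*(z2*n1) + n2*(z2*n2)) by ring. replace (z2*n1) with (z1*n2) by lra. ring. }
assert (Hz0 : z0 = 0).
{ assert (n0 * (z0*t0 - z1*t1 - z2*t2) = z0 * (n0*t0 - n1*t1 - n2*t2)).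
  { replace (n0 * (z0*t0 - z1*t1 - z2*t2)) with (z0*n0*t0 - (z1*n0)*t1 - (z2*n0)*t2) by ring.
    rewrite E1, E2. ring. }
  rewrite HZT, HNT in H. lra. }
subst z0. split; auto. split.
apply Rmult_eq_reg_l with n0; auto. lra.
apply Rmult_eq_reg_l with n0; auto. lra. }
destruct HZ0 as [Z0 [Z1 Z2]]. unfold Z, vsub in Z0, Z1, Z2; cbn [c0 c1 c2] in Z0, Z1, Z2.
apply V3_eq; lra.
Qed.
Lemma exp_t2 x : 0 <= x -> 1 + x + x^2/2 <= exp x.
Proof. intros. pose proof (exp_ge_taylor x 2 H). simpl in H0.
replace (1 + x + x^2/2) with (1 / 1 + x * 1 / 1 + x * (x * 1) / (1 + 1)); [exact H0|field]. Qed.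

Lemma final_ineq l t0 : 0 <= l -> 0 <= t0 ->
  Rabs (ln (1 + l + l ^ 2 * ch t0 / (2 * exp t0))) <= l.
Proof. intros Hl Ht.
assert (He : 0 < exp t0) by apply exp_pos.
assert (Hk : 0 < ch t0 / exp t0) by (unfold ch; apply Rdiv_lt_0_compat; [pose proof (exp_pos t0); pose proof (exp_pos (-t0)); lra | lra]).
assert (Hk1 : ch t0 / exp t0 <= 1).
{ unfold ch. assert (exp (- t0) <= exp t0) by (apply exp_le_3 || (destruct (Rle_lt_or_eq_dec _ _ Ht); [left; apply exp_increasing; lra| right; subst; rewrite Ropp_0; auto])).
  apply Rmult_le_reg_r with (exp t0); auto. field_simplify; lra. }
set (Q := 1 + l + l ^ 2 * ch t0 / (2 * exp t0)).
assert (HQ : Q = 1 + l + l^2 / 2 * (ch t0 / exp t0)) by (unfold Q; field; lra).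
assert (Q1 : 1 <= Q). { rewrite HQ. assert (0 <= l^2/2 * (ch t0 / exp t0)) by (apply Rmult_le_pos; [nra|lra]). lra. }
rewrite Rabs_right. 2: { rewrite <- ln_1. apply Rle_ge. destruct (Rle_lt_or_eq_dec _ _ Q1). left; apply ln_increasing; lra. right; rewrite e; auto. }
rewrite <- (ln_exp l). destruct (Rle_lt_or_eq_dec Q (exp l)).
- rewrite HQ. pose proof (exp_t2 l Hl). assert (l^2/2 * (ch t0 / exp t0) <= l^2/2) by (rewrite <- (Rmult_1_r (l^2/2)) at 2; apply Rmult_le_compat_l; nra). lra.
- left. apply ln_increasing; lra.
- right. rewrite e. auto.
Qed.
Lemma L_deriv (f : R -> V3) W s D :
  is_derive (fun x => c0 (f x)) s (c0 D) -> is_derive (fun x => c1 (f x)) s (c1 D) ->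
  is_derive (fun x => c2 (f x)) s (c2 D) -> is_derive (fun x => L (f x) W) s (L D W).
Proof. intros H0 H1 H2. unfold L.
set (F0 := fun x => c0 (f x)) in *. set (F1 := fun x => c1 (f x)) in *. set (F2 := fun x => c2 (f x)) in *.
apply is_derive_ext with (f := fun x => F0 x * c0 W - F1 x * c1 W - F2 x * c2 W); [reflexivity|].
auto_derive.
- repeat split; eexists; eauto.
- change (fun x => F0 x) with F0; change (fun x => F1 x) with F1; change (fun x => F2 x) with F2. rewrite (is_derive_unique F0 s (c0 D) H0), (is_derive_unique F1 s (c1 D) H1), (is_derive_unique F2 s (c2 D) H2). ring.
Qed.

Lemma chsh_deriv a b t : is_derive (fun x => ch x * a + sh x * b) t (sh t * a + ch t * b).
Proof. unfold ch, sh. auto_derive; auto. field. Qed.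
Theorem mainTheorem3 (Hc : pt -> Prop) (p : pt -> pt) (h : R -> pt) (l : R)
    (u : R -> pt) (w : pt) :
  horocycle Hc -> parabolic p -> preserves p Hc ->
  pos_oriented_param Hc p h l ->
  geodesic u -> tangent_to u h ->
  inH w -> p w = u 0 ->
  Rabs (winding_time u w) <= l.
Proof.
intros [c [Hgc HHc]] [[_ [_ Hiso]] _] _ [[Hhc [_ [_ Hhd]]] [Hl Hpl]] Hgu
  [t0 [s0 [Ht0 [Hus [Hdx [Hdy [Hex Hey]]]]]]] Hw Hpw.
destruct (geo_class c Hgc) as [Ec [HEc [HPEc Hcc]]].
pose proof Hgc as [Hinc _].
set (Pc := Phi (c 0)) in *.
set (Nc := vadd Pc Ec).
assert (HPc1 : L Pc Pc = 1) by (apply L_Phi_self, Hinc).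
destruct (N_props _ _ HPc1 HEc HPEc) as [HNN HNP].
assert (HNdef : Nc = vadd Pc Ec) by reflexivity. clearbody Nc. rewrite <- HNdef in HNN, HNP.
assert (HN0 : c0 Nc <> 0).
{ clear -HNN HNP. intro Hz. revert Hz HNN HNP. destruct Nc as [n0 n1 n2], Pc as [q0 q1 q2]; unfold L; cbn [c0 c1 c2].
  intros. subst. assert (Hs : Rsqr n1 + Rsqr n2 = 0) by (unfold Rsqr; lra).
  apply Rplus_sqr_eq_0 in Hs. destruct Hs. subst. lra. }
assert (Hinh : forall s, inH (h s)) by (intro s; apply (HHc (h s)), Hhc).
assert (HhN : forall s, L (Phi (h s)) Nc = 1).
{ intro s. destruct (proj1 (HHc (h s)) (Hhc s)) as [Hi Hb].
  rewrite (buse_val c Ec _ _ Hgc HEc HPEc Hcc Hi (Hinc 0)) in Hb.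
  fold Pc in Hb. rewrite <- HNdef in Hb. rewrite (L_sym Pc Nc), HNP, ln_1 in Hb.
  assert (Hp : 0 < L (Phi (h s)) Nc).
  { apply (null_pos Pc); auto. apply Phi0_pos, Hinc. apply Phi0_pos, Hi. apply L_Phi_self, Hi. }
  rewrite <- (exp_ln _ Hp). replace (ln (L (Phi (h s)) Nc)) with 0 by lra. apply exp_0. }
set (Dh := fun s => dPhi (h s) (Derive (fun t => fst (h t)) s) (Derive (fun t => snd (h t)) s)).
assert (HDh : forall s, is_derive (fun x => c0 (Phi (h x))) s (c0 (Dh s)) /\
   is_derive (fun x => c1 (Phi (h x))) s (c1 (Dh s)) /\ is_derive (fun x => c2 (Phi (h x))) s (c2 (Dh s))).
{ intro s. destruct (Hhd s) as [Ex [Ey _]]. apply dPhi_deriv; auto. apply Hinh. }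
assert (HDD : forall s, L (Dh s) (Dh s) = -1).
{ intro s. destruct (Hhd s) as [_ [_ Hsp]]. unfold Dh. rewrite dPhi_speed by apply Hinh.
  set (a := Derive (fun t => fst (h t)) s) in *. set (b := Derive (fun t => snd (h t)) s) in *.
  assert (Hq : a^2 + b^2 = snd (h s) ^ 2).
  { rewrite <- Hsp. rewrite pow2_sqrt; auto. nra. }
  rewrite Hq. field. pose proof (Hinh s). unfold inH in H. lra. }
assert (HDN : forall s, L (Dh s) Nc = 0).
{ intro s. destruct (HDh s) as [A0 [A1 A2]].
  pose proof (L_deriv (fun x => Phi (h x)) Nc s (Dh s) A0 A1 A2) as H1.
  assert (H2 : is_derive (fun x => L (Phi (h x)) Nc) s 0).
  { apply is_derive_ext with (f := fun _ => 1). intro; rewrite HhN; auto. apply (is_derive_const 1 s). }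
  rewrite <- (is_derive_unique _ _ _ H1). rewrite (is_derive_unique _ _ _ H2). auto. }
set (V := Dh s0). set (X0 := Phi (h s0)).
assert (HVV : L V V = -1) by apply HDD.
assert (HVN : L V Nc = 0) by apply HDN.
assert (HX0V : L X0 V = 0) by (apply dPhi_orth, Hinh).
assert (HX0X0 : L X0 X0 = 1) by (apply L_Phi_self, Hinh).
assert (HX0N : L X0 Nc = 1) by apply HhN.
set (r := fun s => - L (Phi (h s)) V).
set (dr := fun s => - L (Dh s) V).
assert (Hr : forall s, is_derive r s (dr s)).
{ intro s. destruct (HDh s) as [A0 [A1 A2]].
  apply (is_derive_opp (fun x => L (Phi (h x)) V)). apply L_deriv; auto. }
assert (Hdr1 : forall s, dr s = 1 \/ dr s = -1).
{ intro s. pose proof (dr_sq Nc V (Dh s) HN0 HNN HVV HVN (HDD s) (HDN s)).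
  unfold dr. assert ((L (Dh s) V - 1) * (L (Dh s) V + 1) = 0) by nra.
  apply Rmult_integral in H0. destruct H0; [right|left]; lra. }
assert (Hdr0 : dr s0 = 1) by (unfold dr; fold V; lra).
pose proof (darboux_one r dr s0 Hr Hdr1 Hdr0) as Hdr.
assert (Hraff : forall s, r s = s - s0).
{ intro s. rewrite (affine_of_deriv r s0) by (intro x; rewrite <- (Hdr x); apply Hr).
  unfold r at 1. fold X0. rewrite HX0V. ring. }
assert (Hhphi : forall s, Phi (h s) = phiv X0 V Nc (s - s0)).
{ intro s. rewrite <- Hraff. apply horo_point; auto. apply L_Phi_self, Hinh. }
destruct (geo_class u Hgu) as [Eu [HEu [HPEu Hcu]]].
pose proof Hgu as [Hinu _].
set (P0 := Phi (u 0)) in *.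
assert (HP01 : L P0 P0 = 1) by (apply L_Phi_self, Hinu).
assert (HV : V = vadd (vsc (sh t0) P0) (vsc (ch t0) Eu)).
{ assert (HDu : V = dPhi (u t0) (Derive (fun t => fst (u t)) t0) (Derive (fun t => snd (u t)) t0)).
  { unfold V, Dh. rewrite Hus, Hex, Hey. reflexivity. }
  destruct (dPhi_deriv u t0 Hdx Hdy (Hinu t0)) as [A0 [A1 A2]].
  rewrite <- HDu in A0, A1, A2.
  assert (K : forall (f : V3 -> R) (a b : V3), (forall x y k1 k2, f (vadd (vsc k1 x) (vsc k2 y)) = k1 * f x + k2 * f y) ->
     is_derive (fun x => f (Phi (u x))) t0 (f V) -> f V = sh t0 * f P0 + ch t0 * f Eu).
  { intros f a b Hf Hd. apply is_derive_unique in Hd. rewrite <- Hd.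
    apply is_derive_unique. eapply is_derive_ext; [|apply (chsh_deriv (f P0) (f Eu) t0)].
    intro t. simpl. rewrite Hcu, Hf. reflexivity. }
  apply V3_eq; cbn [vadd vsc c0 c1 c2].
  - apply (K c0 P0 P0); [intros; reflexivity | exact A0].
  - apply (K c1 P0 P0); [intros; reflexivity | exact A1].
  - apply (K c2 P0 P0); [intros; reflexivity | exact A2]. }
assert (HX0 : X0 = vadd (vsc (ch t0) P0) (vsc (sh t0) Eu)).
{ unfold X0. rewrite <- Hus. apply Hcu. }
assert (Hg : forall q, L (Phi w) (phiv X0 V Nc q) = L P0 (phiv X0 V Nc (q + l))).
{ intro q. replace q with (s0 + q - s0) at 1 by ring. replace (q + l) with (s0 + q + l - s0) by ring.
  rewrite <- (Hhphi (s0 + q)), <- (Hhphi (s0 + q + l)).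
  unfold P0. rewrite <- !ch_hdist; try apply Hinh; try apply Hinu; try exact Hw.
  rewrite <- (Hiso w (h (s0 + q)) Hw (Hinh _)). rewrite Hpw, Hpl. reflexivity. }
unfold winding_time.
rewrite (buse_val u Eu w (u 0) Hgu HEu HPEu Hcu Hw (Hinu 0)).
fold P0.
destruct (N_props _ _ HP01 HEu HPEu) as [_ HNu].
rewrite (L_sym P0 (vadd P0 Eu)), HNu, ln_1, Rminus_0_r.
pose proof (Hg 0) as G0. pose proof (Hg 1) as G1. pose proof (Hg (-1)) as G2.
rewrite !L_phiv in G0, G1, G2.
assert (Lgen : forall a k1 k2 x y, L a (vadd (vsc k1 x) (vsc k2 y)) = k1 * L a x + k2 * L a y)
  by (intros; destruct a,x,y; unfold L; cbn [vadd vsc c0 c1 c2]; ring).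
assert (HPX : L P0 X0 = ch t0) by (rewrite HX0, Lgen, HP01, HPEu; ring).
assert (HPV : L P0 V = sh t0) by (rewrite HV, Lgen, HP01, HPEu; ring).
assert (HPN : L P0 Nc = ch t0).
{ rewrite HX0, L_sym, Lgen in HX0N. rewrite HV, L_sym, Lgen in HVN.
  rewrite (L_sym Nc P0), (L_sym Nc Eu) in HX0N, HVN.
  pose proof (ch_sh t0).
  set (a := L P0 Nc) in *. set (b := L Eu Nc) in *.
  assert (a * (ch t0 ^ 2 - sh t0 ^ 2) = ch t0).
  { transitivity (ch t0 * (ch t0 * a + sh t0 * b) - sh t0 * (sh t0 * a + ch t0 * b)); [ring|].
    rewrite HX0N, HVN. ring. }
  rewrite H in H0. lra. }
rewrite HPX, HPV, HPN in G0, G1, G2.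
assert (HA : L (Phi w) X0 = ch t0 * L (Phi w) P0 + sh t0 * L (Phi w) Eu) by (rewrite HX0, Lgen; ring).
assert (HB : L (Phi w) V = sh t0 * L (Phi w) P0 + ch t0 * L (Phi w) Eu) by (rewrite HV, Lgen; ring).
assert (Hexp : ch t0 + sh t0 = exp t0) by (unfold ch, sh; field).
assert (HwN : L (Phi w) (vadd P0 Eu) = L (Phi w) P0 + L (Phi w) Eu) by (destruct (Phi w), P0, Eu; unfold L; cbn [vadd c0 c1 c2]; ring).
assert (Hsum : L (Phi w) P0 + L (Phi w) Eu = 1 + l + l ^ 2 * ch t0 / (2 * exp t0)).
{ assert (He : 0 < exp t0) by apply exp_pos.
  assert (Hs : L (Phi w) X0 + L (Phi w) V = exp t0 * (L (Phi w) P0 + L (Phi w) Eu)) by (rewrite HA, HB, <- Hexp; ring).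
  assert (HAv : L (Phi w) X0 = ch t0 + l * sh t0 + l^2/2 * ch t0) by (transitivity (L (Phi w) X0 + 0 * L (Phi w) V + 0 ^ 2 / 2 * L (Phi w) Nc); [field| rewrite G0; field]).
  assert (HBv : L (Phi w) V = sh t0 + l * ch t0) by (apply Rmult_eq_reg_l with 2; [|lra]; transitivity (
    (L (Phi w) X0 + 1 * L (Phi w) V + 1 ^ 2 / 2 * L (Phi w) Nc) - (L (Phi w) X0 + -1 * L (Phi w) V + (-1) ^ 2 / 2 * L (Phi w) Nc)); [field|]; rewrite G1, G2; field).
  apply Rmult_eq_reg_l with (exp t0); [|lra]. rewrite <- Hs, HAv, HBv, <- Hexp. field.
  rewrite Hexp. lra. }
rewrite HwN, Hsum. apply final_ineq; auto.
Qed.
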